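(* Let $u$ be a positive entire radial solution of $$\Delta^3u=-\frac{1}{u^3}\quad\text{in }\mathbb{R}^3,$$ and assume that $\Delta^2u(\infty):=\lim_{r\to\infty}\Delta^2u(r)>0$. Then there exists a positive entire radial solution $v$ of the same equation such that $$v(0)=u(0),\qquad \Delta v(0)<\Delta u(0),\qquad \Delta^2v(0)=\Delta^2u(0).$$
   Context: A radial function on $\mathbb{R}^3$ is written $u(r)$, $r=|x|$; for radial functions $\Delta w=w''+\frac{2}{r}w'$. An entire solution is a smooth solution defined on all of $\mathbb{R}^3$. For a positive entire radial solution, $\Delta^2u$ is monotone decreasing in $r$, so the limit $\Delta^2u(\infty)$ exists. *)

(* Defs.v *)
From Stdlib Require Import Reals.
From Coquelicot Require Import Coquelicot.
Open Scope R_scope.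

(* A radial function on R^3 is represented by its profile U : R -> R,
   u(x) = U(|x|).  u is smooth on R^3 iff U extends to an even C^infinity
   function on R; we use this even extension. *)
Definition smooth (f : R -> R) : Prop := forall (n : nat) (x : R), ex_derive_n f n x.
Definition even_fun (f : R -> R) : Prop := forall r, f (- r) = f r.

(* Radial Laplacian in R^3: w'' + (2/r) w'.  At r = 0 the value is the
   value of the (continuous) Laplacian at the origin, namely 3 w''(0)
   for a smooth even profile w. *)
Definition radLap (w : R -> R) (r : R) : R :=
  if Req_EM_T r 0 then 3 * Derive_n w 2 0
  else Derive_n w 2 r + 2 / r * Derive w r.

Definition pos_entire_radial_solution (u : R -> R) : Prop :=
  even_fun u /\ smooth u /\ (forall r, 0 < u r) /\
  (forall r, 0 <= r -> radLap (radLap (radLap u)) r = - / (u r ^ 3)).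

(* Main.v *)
Require Import Defs.
From Stdlib Require Import Reals Lra Lia.
From Coquelicot Require Import Coquelicot.
Open Scope R_scope.

Lemma exd_cont (f : R -> R) x : ex_derive f x -> continuous f x.
Proof. intros H. apply (@ex_derive_continuous R_AbsRing R_NormedModule). exact H. Qed.

Fixpoint Cn (n:nat) (f:R->R) : Prop :=
  match n with
  | O => forall x, continuous f x
  | S n => (forall x, ex_derive f x) /\ Cn n (Derive f)
  end.

Lemma Cn_ext n : forall f g, (forall x, f x = g x) -> Cn n f -> Cn n g.
Proof.
  induction n; simpl; intros f g H Hf.
  - intros x. eapply continuous_ext; eauto.
  - destruct Hf as [H1 H2]; split.
    + intros x; eapply ex_derive_ext; eauto.
    + apply (IHn (Derive f)); auto. intros; apply Derive_ext; auto.
Qed.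

Lemma Cn_S n : forall f, Cn (S n) f -> Cn n f.
Proof.
  induction n; simpl; intros f [H1 H2].
  - intros x; apply exd_cont; auto.
  - split; auto.
Qed.

Lemma Cn_le m n f : (m <= n)%nat -> Cn n f -> Cn m f.
Proof. induction 1; auto. intros H'; apply IHle, Cn_S; auto. Qed.

Lemma Cn_cont n f : Cn n f -> forall x, continuous f x.
Proof. intros H; apply (Cn_le 0 n); auto; lia. Qed.

Lemma Cn_const n : forall c, Cn n (fun _ => c).
Proof.
  induction n; simpl; intros c.
  - intros; apply continuous_const.
  - split. intros; apply ex_derive_const.
    apply (Cn_ext n (fun _ => 0)). intros; rewrite Derive_const; auto. apply IHn.
Qed.

Lemma Cn_id n : Cn n (fun x => x).
Proof.
  destruct n; simpl.
  - intros; apply continuous_id.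
  - split. intros; apply ex_derive_id.
    apply (Cn_ext n (fun _ => 1)). intros; rewrite <- (Derive_id x); reflexivity. apply Cn_const.
Qed.

Lemma Cn_plus n : forall f g, Cn n f -> Cn n g -> Cn n (fun x => f x + g x).
Proof.
  induction n; simpl; intros f g Hf Hg.
  - intros x; apply (continuous_plus f g); auto.
  - destruct Hf as [Hf1 Hf2]; destruct Hg as [Hg1 Hg2]; split.
    + intros x; apply (ex_derive_plus f g); auto.
    + apply (Cn_ext n (fun x => Derive f x + Derive g x)).
      intros; rewrite Derive_plus; auto. apply IHn; auto.
Qed.

Lemma Cn_mult n : forall f g, Cn n f -> Cn n g -> Cn n (fun x => f x * g x).
Proof.
  induction n; simpl; intros f g Hf Hg.
  - intros x; apply (continuous_mult f g); auto.
  - destruct Hf as [Hf1 Hf2]; destruct Hg as [Hg1 Hg2]; split.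
    + intros x; apply ex_derive_mult; auto.
    + apply (Cn_ext n (fun x => Derive f x * g x + f x * Derive g x)).
      intros; rewrite Derive_mult; auto.
      apply Cn_plus; apply IHn; auto.
      apply Cn_S; simpl; auto. apply Cn_S; simpl; auto.
Qed.

Lemma Cn_scal n c f : Cn n f -> Cn n (fun x => c * f x).
Proof. intros; apply (Cn_mult n (fun _ => c) f); auto; apply Cn_const. Qed.

Lemma Cn_minus n f g : Cn n f -> Cn n g -> Cn n (fun x => f x - g x).
Proof.
  intros. apply (Cn_ext n (fun x => f x + (-1) * g x)). intros; ring.
  apply Cn_plus; auto. apply Cn_scal; auto.
Qed.

Lemma Cn_inv n : forall f, (forall x, f x <> 0) -> Cn n f -> Cn n (fun x => / f x).
Proof.
  induction n; simpl; intros f Hnz Hf.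
  - intros x; apply continuous_Rinv_comp; auto.
  - destruct Hf as [Hf1 Hf2]; split.
    + intros x. eexists; apply is_derive_inv; [apply Derive_correct; auto | auto].
    + apply (Cn_ext n (fun x => (-1) * (Derive f x * ((/ f x) * (/ f x))))).
      intros; rewrite Derive_inv; auto. field. auto.
      apply Cn_scal. apply Cn_mult; auto. apply Cn_mult; apply IHn; auto; apply Cn_S; simpl; auto.
Qed.

Lemma Cn_smooth_aux n : forall f, Cn (S n) f -> forall x, ex_derive (Derive_n f n) x.
Proof.
  induction n; intros f Hf x.
  - simpl in Hf; destruct Hf; simpl; auto.
  - destruct Hf as [H1 H2].
    apply (ex_derive_ext (Derive_n (Derive f) n)).
    intros t. rewrite <- Nat.add_1_r, <- (Derive_n_comp f n 1 t); reflexivity.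
    apply IHn. simpl. exact H2.
Qed.

Lemma Cn_smooth f : (forall n, Cn n f) -> smooth f.
Proof.
  intros H n x. destruct n. simpl; auto.
  simpl. apply Cn_smooth_aux; auto.
Qed.

Lemma smooth_Derive f : smooth f -> smooth (Derive f).
Proof.
  intros H n x. destruct n. simpl; auto.
  simpl. apply (ex_derive_ext (Derive_n f (S n))).
  intros t. rewrite <- Nat.add_1_r, <- (Derive_n_comp f n 1 t). reflexivity.
  apply (H (S (S n))).
Qed.

Lemma smooth_Cn n : forall f, smooth f -> Cn n f.
Proof.
  induction n; intros f H.
  - intros x; apply exd_cont; apply (H 1%nat).
  - split. intros x; apply (H 1%nat). apply IHn, smooth_Derive; auto.
Qed.

Definition I0 (psi : R -> R) (r : R) : R := RInt psi 0 r.

Lemma I0_derive psi : (forall x, continuous psi x) -> forall r, is_derive (I0 psi) r (psi r).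
Proof.
  intros Hc r. apply (is_derive_RInt (V:=R_CompleteNormedModule) psi (I0 psi) 0 r).
  apply filter_forall. intros b. unfold I0. apply (RInt_correct (V:=R_CompleteNormedModule)).
  apply (ex_RInt_continuous (V:=R_CompleteNormedModule)). intros; auto.
  auto.
Qed.

Lemma Cn_I0 n psi : Cn n psi -> Cn (S n) (I0 psi).
Proof.
  intros H. assert (Hc := Cn_cont n psi H). split.
  - intros r; eexists; apply I0_derive; auto.
  - apply (Cn_ext n psi); auto. intros; symmetry; apply is_derive_unique, I0_derive; auto.
Qed.

Definition Dq (j : nat) (g : R -> R) (r : R) : R := RInt (fun s => s ^ j * g (r * s)) 0 1.

Lemma cont_pt_of (f : R -> R) x : continuous f x -> continuity_pt f x.
Proof. intros H; apply continuity_pt_filterlim; exact H. Qed.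

Lemma Dq_integrand_derive j g t x : ex_derive g (x * t) ->
  is_derive (fun u => t ^ j * g (u * t)) x (t ^ (S j) * Derive g (x * t)).
Proof.
  intros H. auto_derive. auto. simpl. replace (Derive (fun x0 => g x0) (x*t)) with (Derive g (x*t)) by reflexivity; ring.
Qed.

Lemma Dq_ex_RInt j g y : (forall x, ex_derive g x) -> ex_RInt (fun t => t ^ j * g (y * t)) 0 1.
Proof.
  intros Hg. apply (ex_RInt_continuous (V:=R_CompleteNormedModule)). intros z _.
  apply exd_cont. auto_derive. auto.
Qed.

Lemma Dq_derive j g : (forall x, ex_derive g x) -> (forall x, continuous (Derive g) x) ->
  forall r, is_derive (Dq j g) r (Dq (S j) (Derive g) r).
Proof.
  intros Hg Hc r. unfold Dq.
  assert (E : RInt (fun t => t ^ S j * Derive g (r * t)) 0 1 =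
              RInt (fun t => Derive (fun u => t ^ j * g (u * t)) r) 0 1).
  { apply RInt_ext. intros t _. symmetry. apply is_derive_unique.
    apply Dq_integrand_derive; auto. }
  rewrite E.
  apply (is_derive_RInt_param (fun u t => t ^ j * g (u * t)) 0 1 r).
  - apply filter_forall. intros y t _. eexists; apply Dq_integrand_derive; auto.
  - intros t _.
    apply (continuity_2d_pt_ext (fun u v => v ^ S j * Derive g (u * v))).
    { intros u v; symmetry; apply is_derive_unique, Dq_integrand_derive; auto. }
    apply continuity_2d_pt_mult.
    + apply (continuity_1d_2d_pt_comp (fun v => v ^ S j) (fun _ v => v)).
      apply derivable_continuous_pt, derivable_pt_pow. apply continuity_2d_pt_id2.
    + apply (continuity_1d_2d_pt_comp (Derive g) (fun u v => u * v)).
      apply cont_pt_of; auto.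
      apply continuity_2d_pt_mult. apply continuity_2d_pt_id1. apply continuity_2d_pt_id2.
  - apply filter_forall. intros y. apply Dq_ex_RInt; auto.
Qed.

Lemma Dq_at0 j g : Dq j g 0 = g 0 / INR (S j).
Proof.
  unfold Dq.
  rewrite (RInt_ext _ (fun s => g 0 * s ^ j)).
  2:{ intros x _. replace (0 * x) with 0 by ring. apply Rmult_comm. }
  apply is_RInt_unique.
  assert (H := is_RInt_derive (V:=R_CompleteNormedModule) (fun s => g 0 * s ^ S j / INR (S j)) (fun s => g 0 * s ^ j) 0 1).
  replace (g 0 / INR (S j)) with (minus (g 0 * 1 ^ S j / INR (S j)) (g 0 * 0 ^ S j / INR (S j))).
  apply H.
  - intros x _. auto_derive. auto.
    change (match j with 0%nat => 1 | S _ => INR j + 1 end) with (INR (S j)).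
    field. apply not_0_INR; lia.
  - intros x _. apply exd_cont. auto_derive. auto.
  - rewrite pow1, pow_i by lia. unfold minus, plus, opp; simpl.
    assert (INR (S j) <> 0) by (apply not_0_INR; lia). field. auto.
Qed.

Lemma Cn_Dq n : forall j g, Cn (S n) g -> Cn n (Dq j g).
Proof.
  induction n; intros j g Hg.
  - destruct Hg as [H1 H2]. intros x. apply exd_cont. eexists; apply Dq_derive; auto.
  - destruct Hg as [H1 H2]. assert (Hc := Cn_cont _ _ H2). split.
    + intros x; eexists; apply Dq_derive; auto.
    + apply (Cn_ext n (Dq (S j) (Derive g))).
      intros; symmetry; apply is_derive_unique, Dq_derive; auto.
      apply IHn; auto.
Qed.

Lemma Dq0_mul W r : (forall x, ex_derive W x) -> (forall x, continuous (Derive W) x) ->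
  r * Dq 0 (Derive W) r = W r - W 0.
Proof.
  intros H1 H2. unfold Dq.
  rewrite (RInt_ext _ (fun s => Derive W (r * s + 0))).
  2:{ intros; rewrite Rplus_0_r; simpl; ring. }
  assert (E := RInt_comp_lin (V:=R_CompleteNormedModule) (Derive W) r 0 0 1).
  rewrite Rmult_0_r, Rmult_1_r, Rplus_0_r in E. replace (r + 0) with r in E by ring.
  change (scal r (RInt (fun s : R => Derive W (r * s + 0)) 0 1) = W r - W 0).
  rewrite <- (RInt_scal (V:=R_CompleteNormedModule)).
  rewrite E. apply RInt_Derive.
  - intros; auto.
  - intros; auto.
  - apply (ex_RInt_continuous (V:=R_CompleteNormedModule)). intros; auto.
  - apply (ex_RInt_continuous (V:=R_CompleteNormedModule)). intros z _.
    apply (continuous_comp (fun s => r * s + 0) (Derive W)). apply exd_cont; auto_derive; auto. auto.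
Qed.

Ltac fold_eta := repeat match goal with |- context [fun x : R => ?g x] => progress change (fun x : R => g x) with g end.

Definition odd_fun (f : R -> R) : Prop := forall r, f (- r) = - f r.
Definition DD (W : R -> R) := Derive (Derive W).
Definition DW (W : R -> R) := Dq 0 (Derive W).

Lemma odd_0 f : odd_fun f -> f 0 = 0.
Proof. intros H. specialize (H 0). rewrite Ropp_0 in H. lra. Qed.

Lemma Derive_odd (f : R -> R) : (forall x, ex_derive f x) -> odd_fun f -> even_fun (Derive f).
Proof.
  intros Hd Ho r.
  assert (E : forall y, f y = - f (- y)).
  { intros y. rewrite Ho, Ropp_involutive. ring. }
  rewrite (Derive_ext f (fun y => - f (- y))) by auto.
  apply is_derive_unique. auto_derive. auto. change (fun x : R => f x) with f.
  rewrite Ropp_involutive. ring.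
Qed.

Lemma Derive_even (f : R -> R) : (forall x, ex_derive f x) -> even_fun f -> odd_fun (Derive f).
Proof.
  intros Hd Ho r.
  assert (E : forall y, f y = f (- y)).
  { intros y. rewrite Ho. auto. }
  rewrite (Derive_ext f (fun y => f (- y))) by auto.
  apply is_derive_unique. auto_derive. auto. change (fun x : R => f x) with f.
  rewrite Ropp_involutive. ring.
Qed.

Lemma radLap_ext f g r : (forall x, f x = g x) -> radLap f r = radLap g r.
Proof.
  intros H. unfold radLap. destruct (Req_EM_T r 0).
  - rewrite (Derive_n_ext f g); auto.
  - rewrite (Derive_n_ext f g), (Derive_ext f g); auto.
Qed.

Lemma smooth_Cn_all f : smooth f -> forall n, Cn n f.
Proof. intros; apply smooth_Cn; auto. Qed.

Lemma Cn_smooth_all f : (forall n, Cn n f) -> smooth f.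
Proof. apply Cn_smooth. Qed.

Lemma exd_of_Cn n (f : R -> R) : Cn (S n) f -> forall x, ex_derive f x.
Proof. intros [H _]; auto. Qed.

Lemma radLap_G f : smooth f -> Derive f 0 = 0 ->
  forall r, radLap f r = DW (DD (fun x => x * f x)) r.
Proof.
  intros Hs Hf0 r.
  assert (C := smooth_Cn_all f Hs).
  assert (d0 : forall x, ex_derive f x) by (apply (exd_of_Cn 0), C).
  assert (d1 : forall x, ex_derive (Derive f) x) by (apply (exd_of_Cn 0), (C 2%nat)).
  assert (d2 : forall x, ex_derive (Derive (Derive f)) x) by (apply (exd_of_Cn 0), (C 3%nat)).
  assert (d3 : forall x, ex_derive (Derive (Derive (Derive f))) x) by (apply (exd_of_Cn 0), (C 4%nat)).
  assert (c3 : forall x, continuous (Derive (Derive (Derive f))) x).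
  { intros; apply exd_cont; auto. }
  set (G := fun x => x * f x).
  assert (G1 : forall x, Derive G x = f x + x * Derive f x).
  { intros x. unfold G. apply is_derive_unique. auto_derive. auto. Timeout 5 fold_eta. ring. }
  assert (G2 : forall x, Derive (Derive G) x = 2 * Derive f x + x * Derive (Derive f) x).
  { intros x. rewrite (Derive_ext _ _ x G1). apply is_derive_unique. auto_derive.
    split; auto. Timeout 5 fold_eta. ring. }
  assert (G3 : forall x, Derive (Derive (Derive G)) x = 3 * Derive (Derive f) x + x * Derive (Derive (Derive f)) x).
  { intros x. rewrite (Derive_ext _ _ x G2). apply is_derive_unique. auto_derive.
    split; auto. Timeout 5 fold_eta. ring. }
  assert (eG3 : forall x, ex_derive (Derive (Derive G)) x).
  { intros x. eapply ex_derive_ext. intros; symmetry; apply G2. auto_derive. split; auto. }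
  assert (cG3 : forall x, continuous (Derive (Derive (Derive G))) x).
  { intros x. eapply continuous_ext. intros; symmetry; apply G3. apply exd_cont. auto_derive.
    repeat split; auto. }
  unfold DW, DD. fold G.
  unfold radLap. destruct (Req_EM_T r 0) as [->|Hr].
  - rewrite Dq_at0, G3. simpl. Timeout 10 fold_eta. field.
  - assert (M := Dq0_mul (Derive (Derive G)) r eG3 cG3).
    rewrite !G2, Hf0 in M. apply Rmult_eq_reg_l with r; auto.
    rewrite M. simpl. Timeout 5 fold_eta. field. auto.
Qed.

Lemma Cn_DW n W : Cn (S (S n)) W -> Cn n (DW W).
Proof. intros [H1 H2]. exact (Cn_Dq n 0 (Derive W) H2). Qed.

Lemma smooth_DW W : smooth W -> smooth (DW W).
Proof.
  intros H. apply Cn_smooth_all. intros n. apply Cn_DW. apply smooth_Cn; auto.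
Qed.

Lemma smooth_DD W : smooth W -> smooth (DD W).
Proof. intros; unfold DD; apply smooth_Derive, smooth_Derive; auto. Qed.

Lemma DW_mul W r : smooth W -> r * DW W r = W r - W 0.
Proof.
  intros H. assert (C := smooth_Cn_all W H). apply Dq0_mul.
  exact (exd_of_Cn 0 _ (C 1%nat)). intros; exact (Cn_cont 0 _ (proj2 (C 1%nat)) x).
Qed.

Lemma Derive_DW0 W : smooth W -> Derive (DW W) 0 = DD W 0 / 2.
Proof.
  intros H. assert (C := smooth_Cn_all W H). unfold DW.
  rewrite (is_derive_unique _ _ _ (Dq_derive 0 (Derive W) (exd_of_Cn 0 _ (proj2 (C 2%nat)))
     (Cn_cont 0 _ (proj2 (proj2 (C 2%nat)))) 0)).
  rewrite Dq_at0. unfold DD. simpl. field.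
Qed.

Lemma DW_at0 W : DW W 0 = Derive W 0.
Proof. unfold DW. rewrite Dq_at0. simpl. field. Qed.

Lemma radLap_DW W : smooth W -> W 0 = 0 -> DD W 0 = 0 ->
  forall r, radLap (DW W) r = DW (DD W) r.
Proof.
  intros Hs H0 H2 r.
  rewrite radLap_G.
  - assert (E0 : forall x, x * DW W x = W x).
    { intros x. rewrite DW_mul; auto. rewrite H0; ring. }
    assert (E1 : forall x, Derive (fun x => x * DW W x) x = Derive W x).
    { intros; apply Derive_ext; auto. }
    assert (E2 : forall x, Derive (Derive (fun x => x * DW W x)) x = Derive (Derive W) x).
    { intros; apply Derive_ext; auto. }
    assert (E3 : forall x, Derive (Derive (Derive (fun x => x * DW W x))) x = Derive (Derive (Derive W)) x).
    { intros; apply Derive_ext; auto. }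
    unfold DW at 1 3, DD, Dq. apply RInt_ext. intros. rewrite E3. auto.
  - apply smooth_DW; auto.
  - rewrite Derive_DW0; auto. rewrite H2; field.
Qed.

Lemma smooth_mul_id f : smooth f -> smooth (fun r => r * f r).
Proof.
  intros H. apply Cn_smooth_all. intros n. apply Cn_mult. apply Cn_id. apply smooth_Cn; auto.
Qed.

Lemma smooth_exd f : smooth f -> forall x, ex_derive f x.
Proof. intros H x. apply (H 1%nat). Qed.

Lemma smooth_cont f : smooth f -> forall x, continuous f x.
Proof. intros H x. apply exd_cont, smooth_exd; auto. Qed.

Lemma odd_DD W : smooth W -> odd_fun W -> odd_fun (DD W).
Proof.
  intros Hs Ho. unfold DD. apply Derive_even. apply smooth_exd, smooth_Derive; auto.
  apply Derive_odd; auto. apply smooth_exd; auto.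
Qed.

Lemma even_DW W : smooth W -> odd_fun W -> even_fun (DW W).
Proof.
  intros Hs Ho r. assert (E := Derive_odd W (smooth_exd W Hs) Ho).
  unfold DW, Dq. apply RInt_ext. intros x _.
  replace (- r * x) with (- (r * x)) by ring. rewrite E; auto.
Qed.

Lemma radLap_odd W : smooth W -> odd_fun W -> forall r, radLap (DW W) r = DW (DD W) r.
Proof.
  intros Hs Ho r. apply radLap_DW; auto. apply odd_0; auto.
  apply odd_0, odd_DD; auto.
Qed.

Lemma radLap3_odd W : smooth W -> odd_fun W ->
  forall r, radLap (radLap (radLap (DW W))) r = DW (DD (DD (DD W))) r.
Proof.
  intros Hs Ho r.
  assert (S2 := smooth_DD W Hs). assert (O2 := odd_DD W Hs Ho).
  assert (S4 := smooth_DD _ S2). assert (O4 := odd_DD _ S2 O2).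
  rewrite (radLap_ext (radLap (radLap (DW W))) (radLap (DW (DD W)))).
  rewrite (radLap_ext (radLap (DW (DD W))) (DW (DD (DD W)))).
  apply radLap_odd; auto.
  intros; apply radLap_odd; auto.
  intros x. apply radLap_ext. intros; apply radLap_odd; auto.
Qed.

Lemma radLap2_odd W : smooth W -> odd_fun W ->
  forall r, radLap (radLap (DW W)) r = DW (DD (DD W)) r.
Proof.
  intros Hs Ho r.
  assert (S2 := smooth_DD W Hs). assert (O2 := odd_DD W Hs Ho).
  rewrite (radLap_ext (radLap (DW W)) (DW (DD W))).
  apply radLap_odd; auto. intros; apply radLap_odd; auto.
Qed.

Lemma DW_of_mul f : smooth f -> forall x, DW (fun r => r * f r) x = f x.
Proof.
  intros Hs x. destruct (Req_EM_T x 0) as [->|Hx].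
  - rewrite DW_at0. apply is_derive_unique. auto_derive. apply smooth_exd; auto. ring.
  - apply Rmult_eq_reg_l with x; auto. rewrite DW_mul. ring. apply smooth_mul_id; auto.
Qed.

Lemma odd_mul_even f : even_fun f -> odd_fun (fun r => r * f r).
Proof. intros H r. rewrite H. ring. Qed.

Lemma Derive_DW W : smooth W -> forall r, is_derive (DW W) r (Dq 1 (DD W) r).
Proof.
  intros Hs r. unfold DW, DD. apply Dq_derive.
  apply smooth_exd, smooth_Derive; auto.
  apply smooth_cont, smooth_Derive, smooth_Derive; auto.
Qed.

Lemma RInt_anti (f F : R -> R) a b : (forall x, is_derive F x (f x)) -> (forall x, continuous f x) ->
  RInt f a b = F b - F a.
Proof.
  intros H1 H2. apply is_RInt_unique.
  apply (is_RInt_derive (V:=R_CompleteNormedModule) F f); intros; auto.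
Qed.

Lemma mono0 (F dF : R -> R) r : 0 <= r -> (forall x, is_derive F x (dF x)) ->
  (forall x, 0 <= x <= r -> 0 <= dF x) -> F 0 <= F r.
Proof.
  intros Hr Hd Hp.
  destruct (MVT_gen F 0 r dF) as [c [Hc E]].
  - intros; auto.
  - intros; apply cont_pt_of, exd_cont; eexists; eauto.
  - rewrite Rmin_left, Rmax_right in Hc by lra.
    assert (0 <= dF c * (r - 0)). apply Rmult_le_pos; auto; lra. lra.
Qed.

Lemma Dq1_le g h r : 0 <= r -> (forall x, continuous g x) -> (forall x, continuous h x) ->
  (forall t, 0 <= t <= r -> h t <= g t) -> Dq 1 h r <= Dq 1 g r.
Proof.
  intros Hr Hg Hh Hle. unfold Dq. apply RInt_le. lra.
  apply (ex_RInt_continuous (V:=R_CompleteNormedModule)). intros z _.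
  apply (continuous_mult (fun s => s ^ 1) (fun s => h (r * s))).
  apply exd_cont; auto_derive; auto.
  apply (continuous_comp (fun s => r * s) h). apply exd_cont; auto_derive; auto. auto.
  apply (ex_RInt_continuous (V:=R_CompleteNormedModule)). intros z _.
  apply (continuous_mult (fun s => s ^ 1) (fun s => g (r * s))).
  apply exd_cont; auto_derive; auto.
  apply (continuous_comp (fun s => r * s) g). apply exd_cont; auto_derive; auto. auto.
  intros x Hx. apply Rmult_le_compat_l. simpl; lra. apply Hle. split.
  apply Rmult_le_pos; lra. rewrite <- (Rmult_1_r r) at 2. apply Rmult_le_compat_l; lra.
Qed.

Lemma radLap3_ext f g : (forall x, f x = g x) ->
  forall r, radLap (radLap (radLap f)) r = radLap (radLap (radLap g)) r.
Proof.
  intros H r. apply radLap_ext. intros; apply radLap_ext. intros; apply radLap_ext. auto.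
Qed.

Lemma radLap2_ext f g : (forall x, f x = g x) ->
  forall r, radLap (radLap f) r = radLap (radLap g) r.
Proof.
  intros H r. apply radLap_ext. intros; apply radLap_ext. auto.
Qed.

Definition Wu (u : R -> R) := fun r => r * u r.

Lemma mono_ab (F dF : R -> R) a b : a <= b -> (forall x, is_derive F x (dF x)) ->
  (forall x, a <= x <= b -> 0 <= dF x) -> F a <= F b.
Proof.
  intros Hr Hd Hp.
  destruct (MVT_gen F a b dF) as [c [Hc E]].
  - intros; auto.
  - intros; apply cont_pt_of, exd_cont; eexists; eauto.
  - rewrite Rmin_left, Rmax_right in Hc by lra.
    assert (0 <= dF c * (b - a)). apply Rmult_le_pos; auto; lra. lra.
Qed.

Lemma Dq1_lin c r : Dq 1 (fun t => c * t) r = c * r / 3.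
Proof.
  unfold Dq. rewrite (RInt_anti _ (fun s => c * r * s ^ 3 / 3)).
  simpl; field.
  intros x. auto_derive. auto. simpl; field.
  intros x. apply exd_cont. auto_derive. auto.
Qed.

Lemma Dq1_cub b c r : Dq 1 (fun t => b * t + c * t ^ 3) r = b * r / 3 + c * r ^ 3 / 5.
Proof.
  unfold Dq. rewrite (RInt_anti _ (fun s => b * r * s ^ 3 / 3 + c * r ^ 3 * s ^ 5 / 5)).
  simpl; field.
  intros x. auto_derive. auto. simpl; field.
  intros x. apply exd_cont. auto_derive. auto.
Qed.

Lemma Dq1_zero r : Dq 1 (fun _ => 0) r = 0.
Proof.
  unfold Dq. rewrite (RInt_anti _ (fun s => 0)). ring.
  intros x. auto_derive. auto. simpl; ring.
  intros x. apply exd_cont. auto_derive. auto.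
Qed.


Lemma u_facts (u : R -> R) : pos_entire_radial_solution u ->
  smooth (Wu u) /\ odd_fun (Wu u) /\ (forall x, DW (Wu u) x = u x) /\
  (forall r, DD (DD (DD (Wu u))) r = - r * / (u r) ^ 3).
Proof.
  intros [He [Hs [Hp Heq]]].
  assert (S0 : smooth (Wu u)) by (apply smooth_mul_id; auto).
  assert (O0 : odd_fun (Wu u)) by (apply odd_mul_even; auto).
  assert (E0 : forall x, DW (Wu u) x = u x) by (apply DW_of_mul; auto).
  split; [|split; [|split]]; auto.
  set (W6 := DD (DD (DD (Wu u)))).
  assert (S2 := smooth_DD _ S0). assert (O2 := odd_DD _ S0 O0).
  assert (S4 := smooth_DD _ S2). assert (O4 := odd_DD _ S2 O2).
  assert (S6 := smooth_DD _ S4). assert (O6 := odd_DD _ S4 O4).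
  fold W6 in S6, O6.
  assert (Hpos : forall r, 0 < r -> W6 r = - r * / (u r) ^ 3).
  { intros r Hr. assert (H := Heq r (Rlt_le _ _ Hr)).
    rewrite (radLap3_ext u (DW (Wu u))) in H by (intros; rewrite E0; auto).
    rewrite radLap3_odd in H; auto. fold W6 in H.
    assert (M := DW_mul W6 r S6). rewrite (odd_0 W6 O6), H in M. lra. }
  intros r. destruct (Rtotal_order r 0) as [Hr|[Hr|Hr]].
  - rewrite <- (Ropp_involutive (W6 r)), <- O6, Hpos, He by lra. ring.
  - subst. rewrite (odd_0 W6 O6). field. specialize (Hp 0). lra.
  - apply Hpos; auto.
Qed.

Lemma is_derive_sub (F P : R -> R) x dF dP : is_derive F x dF -> is_derive P x dP ->
  is_derive (fun z => F z - P z) x (dF - dP).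
Proof. intros H1 H2. apply (is_derive_minus (K:=R_AbsRing) (V:=R_NormedModule) F P x dF dP); auto. Qed.

Lemma u_lower (u : R -> R) : pos_entire_radial_solution u ->
  (exists l : R, is_lim (radLap (radLap u)) p_infty l /\ 0 < l) ->
  exists m, 0 < m /\ forall r, 0 <= r -> m * (1 + r) ^ 4 <= u r.
Proof.
  intros Hu [l [Hl lpos]].
  destruct (u_facts u Hu) as [S0 [O0 [E0 E6]]].
  destruct Hu as [He [Hs [Hp Heq]]].
  set (W2 := DD (Wu u)). set (W4 := DD W2).
  assert (S2 := smooth_DD _ S0). assert (O2 := odd_DD _ S0 O0).
  assert (S4 := smooth_DD _ S2). assert (O4 := odd_DD _ S2 O2).
  fold W2 in S2, O2, S4, O4. fold W4 in S4, O4.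
  set (F2 := DW W4). set (F1 := DW W2).
  assert (HF2 : forall r, radLap (radLap u) r = F2 r).
  { intros r. rewrite (radLap2_ext u (DW (Wu u))) by (intros; rewrite E0; auto).
    apply radLap2_odd; auto. }
  assert (Hl2 : is_lim F2 p_infty l) by (eapply is_lim_ext; eauto).
  assert (dF2 : forall x, is_derive F2 x (Dq 1 (DD W4) x)) by (intros; apply Derive_DW; auto).
  assert (sF2 : forall x, 0 <= x -> Dq 1 (DD W4) x <= 0).
  { intros x Hx. rewrite <- (Dq1_zero x). apply Dq1_le; auto.
    intros; apply continuous_const. intros; apply smooth_cont, smooth_DD; auto.
    intros t Ht. unfold W4, W2. rewrite E6.
    assert (0 < / u t ^ 3) by (apply Rinv_0_lt_compat, pow_lt, Hp).
    nra. }
  assert (dec : forall x y, 0 <= x <= y -> F2 y <= F2 x).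
  { intros x y Hxy. assert (- F2 x <= - F2 y); [|lra].
    apply (mono_ab (fun z => - F2 z) (fun z => - Dq 1 (DD W4) z)). lra.
    intros z. apply (is_derive_opp (K:=R_AbsRing) (V:=R_NormedModule) F2); auto.
    intros z Hz. assert (H := sF2 z ltac:(lra)). lra. }
  assert (geF2 : forall r, 0 <= r -> l <= F2 r).
  { intros r Hr. assert (H := is_lim_le_loc F2 (fun _ => F2 r) p_infty l (F2 r)).
    simpl in H. apply H; auto. exists r. intros x Hx. apply dec; lra. apply is_lim_const. }
  assert (W4e : forall t, W4 t = t * F2 t).
  { intros t. unfold F2. rewrite DW_mul by auto. rewrite (odd_0 W4 O4). ring. }
  assert (dF1 : forall x, is_derive F1 x (Dq 1 W4 x)) by (intros; apply Derive_DW; auto).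
  assert (geF1 : forall r, 0 <= r -> F1 0 + l * r ^ 2 / 6 <= F1 r).
  { intros r Hr.
    assert (F1 0 - l * 0 ^ 2 / 6 <= F1 r - l * r ^ 2 / 6); [|simpl in *; lra].
    apply (mono_ab (fun z => F1 z - l * z ^ 2 / 6) (fun z => Dq 1 W4 z - l * z / 3)). auto.
    intros z. apply is_derive_sub; auto. auto_derive. auto. simpl; field.
    intros z Hz. rewrite <- Dq1_lin. assert (Dq 1 (fun t => l * t) z <= Dq 1 W4 z); [|lra].
    apply Dq1_le. lra. intros; apply smooth_cont; auto. intros; apply exd_cont; auto_derive; auto.
    intros t Ht. rewrite W4e. assert (H := geF2 t ltac:(lra)). nra. }
  set (b := F1 0).
  assert (S2' : smooth W2) by auto.
  assert (W2e : forall t, W2 t = t * F1 t).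
  { intros t. unfold F1. rewrite DW_mul by auto. rewrite (odd_0 W2 O2). ring. }
  assert (du : forall x, is_derive u x (Dq 1 W2 x)).
  { intros x. apply (is_derive_ext (DW (Wu u))). auto. apply Derive_DW; auto. }
  assert (geu : forall r, 0 <= r -> u 0 + b * r ^ 2 / 6 + l * r ^ 4 / 120 <= u r).
  { intros r Hr.
    assert (u 0 - (b * 0 ^ 2 / 6 + l * 0 ^ 4 / 120) <= u r - (b * r ^ 2 / 6 + l * r ^ 4 / 120)); [|simpl in *; lra].
    apply (mono_ab (fun z => u z - (b * z ^ 2 / 6 + l * z ^ 4 / 120))
                   (fun z => Dq 1 W2 z - (b * z / 3 + (l / 6) * z ^ 3 / 5))). auto.
    intros z. apply is_derive_sub; auto. auto_derive. auto. simpl; field.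
    intros z Hz. rewrite <- Dq1_cub. assert (Dq 1 (fun t => b * t + (l/6) * t ^ 3) z <= Dq 1 W2 z); [|lra].
    apply Dq1_le. lra. intros; apply smooth_cont; auto. intros; apply exd_cont; auto_derive; auto.
    intros t Ht. rewrite W2e. assert (H := geF1 t ltac:(lra)). fold b in H. simpl. nra. }
  set (R0 := 1 + 40 * Rabs b / l).
  assert (R0ge : 1 <= R0). { unfold R0. assert (0 <= 40 * Rabs b / l). apply Rmult_le_pos.
    assert (0 <= Rabs b) by apply Rabs_pos. lra. left; apply Rinv_0_lt_compat; auto. lra. }
  destruct (continuity_ab_min u 0 R0) as [mx [Hmx Hmx']]. lra.
  { intros; apply cont_pt_of, smooth_cont; auto. }
  set (mu := u mx). assert (mupos : 0 < mu) by apply Hp.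
  exists (Rmin (l / 3840) (mu / (1 + R0) ^ 4)). split.
  { apply Rmin_case. lra. apply Rmult_lt_0_compat; auto. apply Rinv_0_lt_compat, pow_lt; lra. }
  intros r Hr. destruct (Rle_or_lt r R0) as [HrR|HrR].
  - apply Rle_trans with (mu / (1 + R0) ^ 4 * (1 + r) ^ 4).
    apply Rmult_le_compat_r. apply pow_le; lra. apply Rmin_r.
    apply Rle_trans with mu. 2: apply Hmx; lra.
    assert ((1 + r) ^ 4 <= (1 + R0) ^ 4). apply pow_incr; lra.
    assert (0 < (1 + R0) ^ 4) by (apply pow_lt; lra).
    unfold Rdiv. rewrite Rmult_assoc. rewrite <- (Rmult_1_r mu) at 2.
    apply Rmult_le_compat_l. lra. rewrite Rmult_comm. 
    apply (Rmult_le_reg_l ((1 + R0) ^ 4)); auto. field_simplify; lra.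
  - apply Rle_trans with (l / 3840 * (1 + r) ^ 4).
    apply Rmult_le_compat_r. apply pow_le; lra. apply Rmin_l.
    assert (H := geu r Hr). assert (0 < u 0) by apply Hp.
    assert (Hb : l * r ^ 2 >= 40 * Rabs b).
    { assert (r <= r ^ 2) by (simpl; nra). 
      assert (R0 * l = l + 40 * Rabs b) by (unfold R0; field; lra). nra. }
    assert (Hb2 : - Rabs b <= b) by (pose proof (Rabs_maj2 b); lra).
    assert (r2 : 0 <= r ^ 2) by (apply pow_le; lra).
    assert (A1 : 0 <= (l * r ^ 2 - 40 * Rabs b) * r ^ 2) by (apply Rmult_le_pos; lra).
    assert (A2 : b * r ^ 2 >= - Rabs b * r ^ 2) by nra.
    assert (A : b * r ^ 2 / 6 >= - (l * r ^ 4) / 240).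
    { replace (r ^ 4) with (r ^ 2 * r ^ 2) by ring. nra. }
    assert (B : (1 + r) ^ 4 <= (2 * r) ^ 4) by (apply pow_incr; lra).
    replace ((2 * r) ^ 4) with (16 * r ^ 4) in B by ring.
    nra.
Qed.

Definition I6 (psi : R -> R) := I0 (I0 (I0 (I0 (I0 (I0 psi))))).
Definition contf (f : R -> R) := forall x, continuous f x.

Lemma I0_cont psi : contf psi -> contf (I0 psi).
Proof. intros H x. apply exd_cont. eexists; apply I0_derive; auto. Qed.

Lemma I0_0 psi : I0 psi 0 = 0.
Proof. unfold I0. rewrite RInt_point. reflexivity. Qed.

Lemma I0_bound (psi1 psi2 g G : R -> R) s : 0 <= s -> contf psi1 -> contf psi2 ->
  (forall x, is_derive G x (g x)) -> contf g ->
  (forall t, 0 <= t <= s -> Rabs (psi1 t - psi2 t) <= g t) ->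
  Rabs (I0 psi1 s - I0 psi2 s) <= G s - G 0.
Proof.
  intros Hs H1 H2 HG Hg Hb. unfold I0.
  assert (E1 : ex_RInt psi1 0 s) by (apply (ex_RInt_continuous (V:=R_CompleteNormedModule)); intros; auto).
  assert (E2 : ex_RInt psi2 0 s) by (apply (ex_RInt_continuous (V:=R_CompleteNormedModule)); intros; auto).
  assert (E := RInt_minus (V:=R_CompleteNormedModule) psi1 psi2 0 s E1 E2).
  change (RInt (fun x => psi1 x - psi2 x) 0 s = RInt psi1 0 s - RInt psi2 0 s) in E.
  rewrite <- E.
  assert (Ed : ex_RInt (fun x => psi1 x - psi2 x) 0 s).
  { apply (ex_RInt_continuous (V:=R_CompleteNormedModule)). intros.
    apply (continuous_minus (V:=R_NormedModule) psi1 psi2); auto. }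
  eapply Rle_trans. apply abs_RInt_le; auto.
  rewrite <- (RInt_anti g G 0 s); auto.
  apply RInt_le; auto.
  apply (ex_RInt_continuous (V:=R_CompleteNormedModule)). intros.
  apply (continuous_comp (fun x => psi1 x - psi2 x) Rabs). 
  apply (continuous_minus (V:=R_NormedModule) psi1 psi2); auto. apply continuous_Rabs.
  apply (ex_RInt_continuous (V:=R_CompleteNormedModule)). intros; auto.
  intros; apply Hb; lra.
Qed.

Definition Lam (A t : R) := exp (A * atan t).

Lemma Lam_mono A x y : 0 <= A -> x <= y -> Lam A x <= Lam A y.
Proof.
  intros HA Hxy. unfold Lam. destruct (Req_dec x y). subst; lra.
  destruct (Req_dec A 0). subst. rewrite !Rmult_0_l; lra.
  left. apply exp_increasing. apply Rmult_lt_compat_l. lra. apply atan_increasing; lra.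
Qed.

Lemma Lam_ge1 A t : 0 <= A -> 0 <= t -> 1 <= Lam A t.
Proof.
  intros. replace 1 with (Lam A 0). apply Lam_mono; auto. unfold Lam. rewrite atan_0, Rmult_0_r, exp_0; auto.
Qed.

Lemma contraction (psi1 psi2 : R -> R) M A r : 0 <= r -> 0 <= A -> 0 <= M -> contf psi1 -> contf psi2 ->
  (forall t, 0 <= t <= r -> Rabs (psi1 t - psi2 t) <= M * (A / (1 + t ^ 2)) * Lam A t) ->
  Rabs (I6 psi1 r - I6 psi2 r) <= M * Lam A r * r ^ 5 / 120.
Proof.
  intros Hr HA HM C1 C2 Hb.
  set (B := M * Lam A r).
  assert (L1 : forall s, 0 <= s <= r -> Rabs (I0 psi1 s - I0 psi2 s) <= B).
  { intros s Hs. eapply Rle_trans.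
    apply (I0_bound psi1 psi2 (fun t => M * (A / (1 + t ^ 2)) * Lam A t) (fun t => M * Lam A t)); auto. lra.
    intros x. unfold Lam. auto_derive. auto. simpl. field. nra.
    intros x. unfold Lam. apply exd_cont. auto_derive. simpl. nra.
    intros t Ht. apply Hb. lra.
    unfold B. assert (0 <= M * Lam A 0). apply Rmult_le_pos; auto. unfold Lam; left; apply exp_pos.
    assert (M * Lam A s <= M * Lam A r). apply Rmult_le_compat_l; auto. apply Lam_mono; lra. lra. }
  assert (CC1 := I0_cont _ C1). assert (CC2 := I0_cont _ C2).
  assert (L2 : forall s, 0 <= s <= r -> Rabs (I0 (I0 psi1) s - I0 (I0 psi2) s) <= B * s).
  { intros s Hs. eapply Rle_trans.
    apply (I0_bound _ _ (fun t => B) (fun t => B * t)); auto. lra.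
    intros x. auto_derive. auto. ring. intros x; apply continuous_const.
    intros t Ht. apply L1. lra. lra. }
  assert (CC1' := I0_cont _ CC1). assert (CC2' := I0_cont _ CC2).
  assert (L3 : forall s, 0 <= s <= r -> Rabs (I0 (I0 (I0 psi1)) s - I0 (I0 (I0 psi2)) s) <= B * s ^ 2 / 2).
  { intros s Hs. eapply Rle_trans.
    apply (I0_bound _ _ (fun t => B * t) (fun t => B * t ^ 2 / 2)); auto. lra.
    intros x. auto_derive. auto. simpl; field. intros x; apply exd_cont; auto_derive; auto.
    intros t Ht. apply L2. lra. simpl; lra. }
  assert (CC1'' := I0_cont _ CC1'). assert (CC2'' := I0_cont _ CC2').
  assert (L4 : forall s, 0 <= s <= r -> Rabs (I0 (I0 (I0 (I0 psi1))) s - I0 (I0 (I0 (I0 psi2))) s) <= B * s ^ 3 / 6).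
  { intros s Hs. eapply Rle_trans.
    apply (I0_bound _ _ (fun t => B * t ^ 2 / 2) (fun t => B * t ^ 3 / 6)); auto. lra.
    intros x. auto_derive. auto. simpl; field. intros x; apply exd_cont; auto_derive; auto.
    intros t Ht. apply L3. lra. simpl; lra. }
  assert (CC1''' := I0_cont _ CC1''). assert (CC2''' := I0_cont _ CC2'').
  assert (L5 : forall s, 0 <= s <= r -> Rabs (I0 (I0 (I0 (I0 (I0 psi1)))) s - I0 (I0 (I0 (I0 (I0 psi2)))) s) <= B * s ^ 4 / 24).
  { intros s Hs. eapply Rle_trans.
    apply (I0_bound _ _ (fun t => B * t ^ 3 / 6) (fun t => B * t ^ 4 / 24)); auto. lra.
    intros x. auto_derive. auto. simpl; field. intros x; apply exd_cont; auto_derive; auto.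
    intros t Ht. apply L4. lra. simpl; lra. }
  assert (CC1'''' := I0_cont _ CC1'''). assert (CC2'''' := I0_cont _ CC2''').
  unfold I6. eapply Rle_trans.
  apply (I0_bound _ _ (fun t => B * t ^ 4 / 24) (fun t => B * t ^ 5 / 120)); auto.
  intros x. auto_derive. auto. simpl; field. intros x; apply exd_cont; auto_derive; auto.
  unfold B. simpl; lra.
Qed.

Ltac rring := match goal with |- ?a = ?b => change (@eq R a b) end; ring.

Lemma I0_neg psi r : contf psi ->
  I0 psi (- r) = RInt (fun y => -1 * psi (-1 * y + 0)) 0 r.
Proof.
  intros C. unfold I0.
  assert (E := RInt_comp_lin (V:=R_CompleteNormedModule) psi (-1) 0 0 r).
  replace (-1 * 0 + 0) with 0 in E by ring. replace (-1 * r + 0) with (- r) in E by ring.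
  rewrite <- E. reflexivity.
  apply (ex_RInt_continuous (V:=R_CompleteNormedModule)); intros; auto.
Qed.

Lemma I0_even_of_odd psi : contf psi -> odd_fun psi -> even_fun (I0 psi).
Proof.
  intros C O r. rewrite I0_neg; auto. unfold I0. apply RInt_ext. intros x _.
  replace (-1 * x + 0) with (- x) by ring. rewrite O. rring.
Qed.

Lemma I0_odd_of_even psi : contf psi -> even_fun psi -> odd_fun (I0 psi).
Proof.
  intros C O r. rewrite I0_neg; auto. unfold I0.
  rewrite (RInt_ext _ (fun y => scal (-1) (psi y))).
  rewrite (RInt_scal (V:=R_CompleteNormedModule)). unfold scal; simpl; unfold mult; simpl. ring.
  apply (ex_RInt_continuous (V:=R_CompleteNormedModule)); intros; auto.
  intros x _. replace (-1 * x + 0) with (- x) by ring. rewrite O. reflexivity.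
Qed.

Lemma I6_odd psi : contf psi -> odd_fun psi -> odd_fun (I6 psi).
Proof.
  intros C O. unfold I6.
  assert (C1 := I0_cont _ C). assert (C2 := I0_cont _ C1). assert (C3 := I0_cont _ C2).
  assert (C4 := I0_cont _ C3). assert (C5 := I0_cont _ C4).
  apply I0_odd_of_even; auto. apply I0_even_of_odd; auto.
  apply I0_odd_of_even; auto. apply I0_even_of_odd; auto.
  apply I0_odd_of_even; auto. apply I0_even_of_odd; auto.
Qed.

Lemma I6_cont psi : contf psi -> contf (I6 psi).
Proof. intros C. unfold I6. repeat apply I0_cont. auto. Qed.

Definition wgt (A t : R) := t * (1 + t) ^ 4 * Lam A t.

Lemma wgt_nonneg A t : 0 <= A -> 0 <= t -> 0 <= wgt A t.
Proof.
  intros. unfold wgt. apply Rmult_le_pos. apply Rmult_le_pos; auto. apply pow_le; lra.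
  unfold Lam; left; apply exp_pos.
Qed.

Lemma wgt_mono A x y : 0 <= A -> 0 <= x <= y -> wgt A x <= wgt A y.
Proof.
  intros HA Hxy. unfold wgt. apply Rmult_le_compat.
  apply Rmult_le_pos. lra. apply pow_le; lra. unfold Lam; left; apply exp_pos.
  apply Rmult_le_compat; try lra. apply pow_le; lra. apply pow_incr; lra.
  apply Lam_mono; lra.
Qed.

Lemma small_le x C : 0 <= C -> (forall k, x <= C * (1/2) ^ k) -> x <= 0.
Proof.
  intros HC H. destruct (Rle_or_lt x 0); auto. exfalso.
  destruct (pow_lt_1_zero (1/2)) with (y := x / (C + 1)) as [N HN].
  rewrite Rabs_right; lra. apply Rdiv_lt_0_compat; lra.
  specialize (HN N (le_n N)). specialize (H N).
  rewrite Rabs_right in HN. 2: apply Rle_ge, pow_le; lra.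
  assert (0 < (1/2) ^ N) by (apply pow_lt; lra).
  assert (x / (C + 1) * (C + 1) = x) by (field; lra).
  nra.
Qed.


Definition Top (Q0 : R -> R) (Phi : (R -> R) -> R -> R) (W : R -> R) := fun r => Q0 r + I6 (Phi W) r.

Lemma Top_step (Phi : (R -> R) -> R -> R) (L : R -> R) A Q0 W W' M :
  0 <= A -> 0 <= M ->
  (forall W, contf W -> contf (Phi W)) ->
  (forall W W' t, Rabs (Phi W t - Phi W' t) <= L t * Rabs (W t - W' t)) ->
  (forall t, 0 <= t -> 0 <= L t /\ L t * (t * (1 + t) ^ 4) <= A / (1 + t ^ 2)) ->
  contf W -> contf W' ->
  (forall t, 0 <= t -> Rabs (W t - W' t) <= M * wgt A t) ->
  forall r, 0 <= r -> Rabs (Top Q0 Phi W r - Top Q0 Phi W' r) <= M / 2 * wgt A r.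
Proof.
  intros HA HM HC HLip HL CW CW' Hb r Hr. unfold Top.
  replace (Q0 r + I6 (Phi W) r - (Q0 r + I6 (Phi W') r)) with (I6 (Phi W) r - I6 (Phi W') r) by ring.
  eapply Rle_trans. apply (contraction _ _ M A r); auto.
  intros t Ht. eapply Rle_trans. apply HLip.
  destruct (HL t (proj1 Ht)) as [HL1 HL2].
  eapply Rle_trans. apply Rmult_le_compat_l. auto. apply Hb; lra.
  unfold wgt. 
  replace (L t * (M * (t * (1 + t) ^ 4 * Lam A t))) with (M * (L t * (t * (1 + t) ^ 4)) * Lam A t) by ring.
  apply Rmult_le_compat_r. unfold Lam; left; apply exp_pos. apply Rmult_le_compat_l; auto.
  unfold wgt.
  assert (r ^ 5 <= r * (1 + r) ^ 4).
  { replace (r ^ 5) with (r * r ^ 4) by ring. apply Rmult_le_compat_l; auto. apply pow_incr; lra. }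
  assert (0 <= M * Lam A r). apply Rmult_le_pos; auto. unfold Lam; left; apply exp_pos.
  assert (M * Lam A r * r ^ 5 <= M * Lam A r * (r * (1 + r) ^ 4)) by (apply Rmult_le_compat_l; auto).
  assert (0 <= M * Lam A r * (r * (1 + r) ^ 4)).
  { apply Rmult_le_pos; auto. apply Rmult_le_pos; auto. apply pow_le; lra. }
  lra.
Qed.

Lemma exists_N C eps : 0 <= C -> 0 < eps -> exists N : nat, C * (1/2) ^ N < eps.
Proof.
  intros HC He.
  destruct (pow_lt_1_zero (1/2)) with (y := eps / (C + 1)) as [N HN].
  rewrite Rabs_right; lra. apply Rdiv_lt_0_compat; lra.
  exists N. specialize (HN N (le_n N)).
  rewrite Rabs_right in HN. 2: apply Rle_ge, pow_le; lra.
  assert (0 < (1/2) ^ N) by (apply pow_lt; lra).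
  assert (eps / (C + 1) * (C + 1) = eps) by (field; lra).
  nra.
Qed.

Lemma fixed_point (Phi : (R -> R) -> R -> R) (L : R -> R) A Q0 W0 M0 :
  0 <= A -> 0 <= M0 ->
  (forall W, contf W -> contf (Phi W)) ->
  (forall W, contf W -> odd_fun W -> odd_fun (Phi W)) ->
  (forall W W' t, Rabs (Phi W t - Phi W' t) <= L t * Rabs (W t - W' t)) ->
  (forall t, 0 <= t -> 0 <= L t /\ L t * (t * (1 + t) ^ 4) <= A / (1 + t ^ 2)) ->
  contf Q0 -> odd_fun Q0 -> contf W0 -> odd_fun W0 ->
  (forall t, 0 <= t -> Rabs (Top Q0 Phi W0 t - W0 t) <= M0 * wgt A t) ->
  exists W, contf W /\ odd_fun W /\ (forall r, W r = Top Q0 Phi W r) /\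
    (forall t, 0 <= t -> Rabs (W t - W0 t) <= 2 * M0 * wgt A t).
Proof.
  intros HA HM HC HO HLip HL CQ OQ C0 O0 H0.
  set (T := Top Q0 Phi).
  assert (TC : forall W, contf W -> contf (T W)).
  { intros W CW x. unfold T, Top. apply (continuous_plus Q0 (I6 (Phi W))); auto.
    apply I6_cont; auto. }
  assert (TO : forall W, contf W -> odd_fun W -> odd_fun (T W)).
  { intros W CW OW r. unfold T, Top. rewrite OQ, (I6_odd (Phi W)); auto. ring. }
  set (Ws := fun k => Nat.iter k T W0).
  assert (WsS : forall k, Ws (S k) = T (Ws k)) by reflexivity.
  assert (Inv : forall k, contf (Ws k) /\ odd_fun (Ws k)).
  { induction k. simpl; auto. rewrite WsS. destruct IHk; split; auto. }
  assert (Step : forall k t, 0 <= t -> Rabs (Ws (S k) t - Ws k t) <= M0 * (1/2) ^ k * wgt A t).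
  { induction k; intros t Ht.
    - simpl. rewrite Rmult_1_r. apply H0; auto.
    - rewrite (WsS (S k)), (WsS k).
      replace (M0 * (1/2) ^ S k) with ((M0 * (1/2) ^ k) / 2) by (simpl; field).
      apply (Top_step Phi L A Q0); auto.
      all: try (apply Rmult_le_pos; auto; apply pow_le; lra).
      all: try (rewrite <- WsS; apply Inv).
      all: try apply Inv.
      all: try (intros; rewrite <- WsS; auto). }
  assert (Tail : forall n k t, 0 <= t ->
    Rabs (Ws (k + n)%nat t - Ws k t) <= 2 * M0 * ((1/2) ^ k - (1/2) ^ (k + n)) * wgt A t).
  { induction n; intros k t Ht.
    - rewrite Nat.add_0_r. replace (Ws k t - Ws k t) with 0 by ring. rewrite Rabs_R0.
      replace ((1/2)^k - (1/2)^k) with 0 by ring. lra.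
    - replace (k + S n)%nat with (S (k + n)) by lia.
      assert (H1 := Step (k + n)%nat t Ht). assert (H2 := IHn k t Ht).
      assert (H3 := Rabs_triang (Ws (S (k + n)) t - Ws (k + n)%nat t) (Ws (k + n)%nat t - Ws k t)).
      replace (Ws (S (k + n)) t - Ws (k + n)%nat t + (Ws (k + n)%nat t - Ws k t)) with
        (Ws (S (k + n)) t - Ws k t) in H3 by ring.
      assert (E : (1/2) ^ S (k + n) = (1/2) ^ (k + n) / 2) by (simpl; field).
      rewrite E.
      replace (2 * M0 * ((1 / 2) ^ k - (1 / 2) ^ (k + n) / 2) * wgt A t) with
        (2 * M0 * ((1 / 2) ^ k - (1 / 2) ^ (k + n)) * wgt A t + M0 * (1 / 2) ^ (k + n) * wgt A t) by field.
      lra. }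
  assert (TailAll : forall n k t, Rabs (Ws (k + n)%nat t - Ws k t) <= 2 * M0 * (1/2) ^ k * wgt A (Rabs t)).
  { intros n k t.
    assert (Hw := wgt_nonneg A (Rabs t) HA (Rabs_pos t)).
    assert (G : forall s, 0 <= s -> Rabs (Ws (k + n)%nat s - Ws k s) <= 2 * M0 * (1/2) ^ k * wgt A s).
    { intros s Hs. eapply Rle_trans. apply Tail; auto.
      assert (0 <= (1/2) ^ (k + n)) by (apply pow_le; lra).
      assert (0 <= wgt A s) by (apply wgt_nonneg; auto).
      assert (0 <= M0 * (1/2)^(k+n) * wgt A s) by (apply Rmult_le_pos; [apply Rmult_le_pos|]; auto).
      nra. }
    destruct (Rle_or_lt 0 t).
    - rewrite (Rabs_right t) by lra. apply G; auto.
    - rewrite (Rabs_left t) by lra. rewrite <- (Ropp_involutive t) at 1 2.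
      rewrite (proj2 (Inv (k + n)%nat)), (proj2 (Inv k)).
      replace (- Ws (k + n)%nat (- t) - - Ws k (- t)) with (- (Ws (k + n)%nat (- t) - Ws k (- t))) by ring.
      rewrite Rabs_Ropp. apply G. lra. }
  assert (Cau : forall t, ex_finite_lim_seq (fun k => Ws k t)).
  { intros t. apply ex_lim_seq_cauchy_corr. intros eps.
    assert (Hw := wgt_nonneg A (Rabs t) HA (Rabs_pos t)).
    destruct (exists_N (2 * M0 * wgt A (Rabs t)) (eps / 2)) as [N HN].
    apply Rmult_le_pos; lra. destruct eps; simpl; lra.
    exists N. intros n m Hn Hm.
    assert (A1 := TailAll (n - N)%nat N t). assert (A2 := TailAll (m - N)%nat N t).
    replace (N + (n - N))%nat with n in A1 by lia. replace (N + (m - N))%nat with m in A2 by lia.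
    assert (A3 := Rabs_triang (Ws n t - Ws N t) (Ws N t - Ws m t)).
    replace (Ws n t - Ws N t + (Ws N t - Ws m t)) with (Ws n t - Ws m t) in A3 by ring.
    rewrite <- Rabs_Ropp in A2. replace (- (Ws m t - Ws N t)) with (Ws N t - Ws m t) in A2 by ring.
    nra. }
  set (Wl := fun t => real (Lim_seq (fun k => Ws k t))).
  assert (islim : forall t, is_lim_seq (fun k => Ws k t) (Wl t)).
  { intros t. unfold Wl. apply Lim_seq_correct'. auto. }
  assert (Bnd : forall k t, Rabs (Wl t - Ws k t) <= 2 * M0 * (1/2) ^ k * wgt A (Rabs t)).
  { intros k t.
    assert (H := is_lim_seq_le_loc (fun n => Rabs (Ws n t - Ws k t)) (fun _ => 2 * M0 * (1/2) ^ k * wgt A (Rabs t))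
      (Rabs (Wl t - Ws k t)) (2 * M0 * (1/2) ^ k * wgt A (Rabs t))).
    simpl in H. apply H.
    - exists k. intros n Hn. replace n with (k + (n - k))%nat by lia. apply TailAll.
    - apply (is_lim_seq_abs _ (Wl t - Ws k t)). apply is_lim_seq_minus'. auto. apply is_lim_seq_const.
    - apply is_lim_seq_const. }
  assert (Wodd : odd_fun Wl).
  { intros t. 
    assert (H1 : is_lim_seq (fun k => - Ws k t) (- Wl t)).
    { apply (is_lim_seq_opp (fun k => Ws k t) (Wl t)). auto. }
    assert (H2 : is_lim_seq (fun k => Ws k (- t)) (- Wl t)).
    { eapply is_lim_seq_ext; [|exact H1]. intros; simpl. rewrite (proj2 (Inv n)). auto. }
    unfold Wl at 1. rewrite (is_lim_seq_unique _ _ H2). reflexivity. }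
  assert (Wcont : contf Wl).
  { intros x. apply continuity_pt_filterlim. apply continuity_pt_locally. intros eps.
    set (C := 2 * M0 * wgt A (Rabs x + 1)).
    assert (HCp : 0 <= C). { unfold C. apply Rmult_le_pos. lra. apply wgt_nonneg; auto.
      pose proof (Rabs_pos x); lra. }
    destruct (exists_N C (eps / 3)) as [k Hk]; auto. destruct eps; simpl; lra.
    assert (Ck := proj1 (Inv k) x). apply continuity_pt_filterlim in Ck.
    apply continuity_pt_locally with (eps := mkposreal (eps / 3) ltac:(destruct eps; simpl; lra)) in Ck.
    assert (Hb : locally x (fun y => Rabs (y - x) < 1)).
    { exists (mkposreal 1 Rlt_0_1). intros y Hy. apply Hy. }
    generalize (filter_and _ _ Ck Hb). apply filter_imp. intros y [Hy1 Hy2]. simpl in Hy1.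
    assert (Hwy : wgt A (Rabs y) <= wgt A (Rabs x + 1)).
    { apply wgt_mono; auto. split. apply Rabs_pos.
      assert (H := Rabs_triang_inv y x). assert (H' := Rabs_triang_inv x y).
      rewrite Rabs_minus_sym in H'. lra. }
    assert (Hwx : wgt A (Rabs x) <= wgt A (Rabs x + 1)).
    { apply wgt_mono; auto. pose proof (Rabs_pos x); lra. }
    assert (B1 := Bnd k y). assert (B2 := Bnd k x).
    assert (0 <= 2 * M0 * (1/2) ^ k). { apply Rmult_le_pos. lra. apply pow_le; lra. }
    assert (B1' : Rabs (Wl y - Ws k y) <= C * (1/2) ^ k).
    { eapply Rle_trans. apply B1. unfold C. 
      replace (2 * M0 * wgt A (Rabs x + 1) * (1 / 2) ^ k) with (2 * M0 * (1/2) ^ k * wgt A (Rabs x + 1)) by ring.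
      apply Rmult_le_compat_l; auto. }
    assert (B2' : Rabs (Wl x - Ws k x) <= C * (1/2) ^ k).
    { eapply Rle_trans. apply B2. unfold C. 
      replace (2 * M0 * wgt A (Rabs x + 1) * (1 / 2) ^ k) with (2 * M0 * (1/2) ^ k * wgt A (Rabs x + 1)) by ring.
      apply Rmult_le_compat_l; auto. }
    assert (T1 := Rabs_triang (Wl y - Ws k y) (Ws k y - Ws k x)).
    assert (T2 := Rabs_triang (Wl y - Ws k y + (Ws k y - Ws k x)) (Ws k x - Wl x)).
    replace (Wl y - Ws k y + (Ws k y - Ws k x) + (Ws k x - Wl x)) with (Wl y - Wl x) in T2 by ring.
    rewrite <- Rabs_Ropp in B2'. replace (- (Wl x - Ws k x)) with (Ws k x - Wl x) in B2' by ring.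
    lra. }
  assert (Fix : forall r, Wl r = T Wl r).
  { assert (Fpos : forall r, 0 <= r -> Wl r = T Wl r).
    { intros r Hr. 
      assert (Hw := wgt_nonneg A r HA Hr).
      assert (K : forall k, Rabs (T Wl r - Wl r) <= 2 * M0 * wgt A r * (1/2) ^ k).
      { intros k.
        assert (S1 : Rabs (T Wl r - T (Ws k) r) <= (2 * M0 * (1/2) ^ k) / 2 * wgt A r).
        { apply (Top_step Phi L A Q0); auto. apply Rmult_le_pos. lra. apply pow_le; lra.
          apply Inv. intros t Ht. assert (H := Bnd k t). rewrite (Rabs_right t) in H by lra. exact H. }
        assert (S2 := Bnd (S k) r). rewrite (Rabs_right r) in S2 by lra.
        rewrite <- WsS in S1.
        assert (T1 := Rabs_triang (T Wl r - Ws (S k) r) (Ws (S k) r - Wl r)).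
        replace (T Wl r - Ws (S k) r + (Ws (S k) r - Wl r)) with (T Wl r - Wl r) in T1 by ring.
        rewrite <- Rabs_Ropp in S2. replace (- (Wl r - Ws (S k) r)) with (Ws (S k) r - Wl r) in S2 by ring.
        assert (E : (1/2) ^ S k = (1/2) ^ k / 2) by (simpl; field).
        rewrite E in S2.
        replace (2 * M0 * (1 / 2) ^ k / 2 * wgt A r) with (M0 * (1/2)^k * wgt A r) in S1 by field.
        replace (2 * M0 * ((1 / 2) ^ k / 2) * wgt A r) with (M0 * (1/2)^k * wgt A r) in S2 by field.
        replace (2 * M0 * wgt A r * (1 / 2) ^ k) with (2 * (M0 * (1/2)^k * wgt A r)) by ring.
        lra. }
      assert (Z := small_le (Rabs (T Wl r - Wl r)) (2 * M0 * wgt A r) ltac:(apply Rmult_le_pos; lra) K).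
      assert (Z' := Rabs_pos (T Wl r - Wl r)).
      assert (Rabs (T Wl r - Wl r) = 0) by lra.
      apply Rabs_eq_0 in H. lra. }
    intros r. destruct (Rle_or_lt 0 r). auto.
    rewrite <- (Ropp_involutive r). rewrite Wodd, TO; auto. rewrite <- Fpos by lra. auto. }
  exists Wl. split; [|split; [|split]]; auto.
  intros t Ht. assert (H := Bnd 0%nat t). rewrite (Rabs_right t) in H by lra. simpl in H. lra.
Qed.


Definition mx (x y : R) := (x + y + Rabs (x - y)) / 2.

Lemma mx_ge_r x y : y <= mx x y.
Proof. unfold mx. pose proof (Rabs_maj2 (x - y)). lra. Qed.
Lemma mx_ge_l x y : x <= mx x y.
Proof. unfold mx. pose proof (Rle_abs (x - y)). lra. Qed.
Lemma mx_eq_l x y : y <= x -> mx x y = x.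
Proof. intros. unfold mx. rewrite Rabs_right by lra. field. Qed.
Lemma mx_lip x y c : Rabs (mx x c - mx y c) <= Rabs (x - y).
Proof.
  unfold mx. replace ((x + c + Rabs (x - c)) / 2 - (y + c + Rabs (y - c)) / 2)
    with (((x - y) + (Rabs (x - c) - Rabs (y - c))) / 2) by field.
  assert (H := Rabs_triang_inv2 (x - c) (y - c)). replace (x - c - (y - c)) with (x - y) in H by ring.
  unfold Rdiv. rewrite Rabs_mult, (Rabs_right (/ 2)) by lra.
  assert (H2 := Rabs_triang (x - y) (Rabs (x - c) - Rabs (y - c))). lra.
Qed.

Lemma inv3_lip p q h : 0 < h -> h <= p -> h <= q ->
  Rabs (/ p ^ 3 - / q ^ 3) <= 3 / h ^ 4 * Rabs (p - q).
Proof.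
  intros Hh Hp Hq.
  assert (E : / p ^ 3 - / q ^ 3 = (q - p) * (/ (p ^ 3 * q) + / (p ^ 2 * q ^ 2) + / (p * q ^ 3))).
  { field. lra. }
  rewrite E, Rabs_mult. rewrite <- Rabs_Ropp, Ropp_minus_distr. rewrite Rmult_comm.
  apply Rmult_le_compat_r. apply Rabs_pos.
  assert (B : forall a b : R, h ^ 4 <= a * b -> 0 < a * b -> / (a * b) <= / h ^ 4).
  { intros a b H1 H2. apply Rinv_le_contravar; auto. apply pow_lt; auto. }
  assert (h2 : h ^ 2 <= p ^ 2) by (apply pow_incr; lra).
  assert (h3 : h ^ 3 <= p ^ 3) by (apply pow_incr; lra).
  assert (k2 : h ^ 2 <= q ^ 2) by (apply pow_incr; lra).
  assert (k3 : h ^ 3 <= q ^ 3) by (apply pow_incr; lra).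
  assert (0 < h ^ 2) by (apply pow_lt; lra). assert (0 < h ^ 3) by (apply pow_lt; lra).
  assert (X1 : / (p ^ 3 * q) <= / h ^ 4).
  { apply B. replace (h ^ 4) with (h ^ 3 * h) by ring. apply Rmult_le_compat; lra.
    apply Rmult_lt_0_compat; lra. }
  assert (X2 : / (p ^ 2 * q ^ 2) <= / h ^ 4).
  { apply B. replace (h ^ 4) with (h ^ 2 * h ^ 2) by ring. apply Rmult_le_compat; lra.
    apply Rmult_lt_0_compat; lra. }
  assert (X3 : / (p * q ^ 3) <= / h ^ 4).
  { apply B. replace (h ^ 4) with (h * h ^ 3) by ring. apply Rmult_le_compat; lra.
    apply Rmult_lt_0_compat; lra. }
  assert (0 < / (p ^ 3 * q)). { apply Rinv_0_lt_compat. apply Rmult_lt_0_compat; try lra. }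
  assert (0 < / (p ^ 2 * q ^ 2)). { apply Rinv_0_lt_compat. apply Rmult_lt_0_compat; try lra. }
  assert (0 < / (p * q ^ 3)). { apply Rinv_0_lt_compat. apply Rmult_lt_0_compat; try lra. }
  rewrite Rabs_right by lra. unfold Rdiv. lra.
Qed.

Definition Fn (u : R -> R) (t x : R) := - / (mx x (u t / 2)) ^ 3.
Definition PhiU (u : R -> R) (W : R -> R) (t : R) := t * Fn u t (W t / t).

Lemma Fn_lip u t x y : 0 < u t -> Rabs (Fn u t x - Fn u t y) <= 48 / (u t) ^ 4 * Rabs (x - y).
Proof.
  intros Hu. unfold Fn.
  replace (- / mx x (u t / 2) ^ 3 - - / mx y (u t / 2) ^ 3) with
    (- (/ mx x (u t / 2) ^ 3 - / mx y (u t / 2) ^ 3)) by ring.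
  rewrite Rabs_Ropp. eapply Rle_trans. apply (inv3_lip _ _ (u t / 2)). lra.
  apply mx_ge_r. apply mx_ge_r.
  replace (3 / (u t / 2) ^ 4) with (48 / u t ^ 4) by (field; lra).
  apply Rmult_le_compat_l. apply Rlt_le, Rdiv_lt_0_compat. lra. apply pow_lt; auto.
  apply mx_lip.
Qed.

Lemma Fn_bound u t x : 0 < u t -> Rabs (Fn u t x) <= 8 / (u t) ^ 3.
Proof.
  intros Hu. unfold Fn. rewrite Rabs_Ropp.
  assert (H := mx_ge_r x (u t / 2)).
  assert (0 < (u t / 2) ^ 3) by (apply pow_lt; lra).
  assert ((u t / 2) ^ 3 <= mx x (u t / 2) ^ 3) by (apply pow_incr; lra).
  rewrite Rabs_right. replace (8 / u t ^ 3) with (/ (u t / 2) ^ 3) by (field; lra).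
  apply Rinv_le_contravar; auto.
  apply Rle_ge, Rlt_le, Rinv_0_lt_compat. lra.
Qed.

Lemma PhiU_lip u W W' t : 0 < u t -> Rabs (PhiU u W t - PhiU u W' t) <= 48 / (u t) ^ 4 * Rabs (W t - W' t).
Proof.
  intros Hu. unfold PhiU. destruct (Req_dec t 0) as [->|Ht].
  - rewrite !Rmult_0_l, Rminus_0_r, Rabs_R0. apply Rmult_le_pos. apply Rlt_le, Rdiv_lt_0_compat. lra.
    apply pow_lt; auto. apply Rabs_pos.
  - replace (t * Fn u t (W t / t) - t * Fn u t (W' t / t)) with (t * (Fn u t (W t / t) - Fn u t (W' t / t))) by ring.
    rewrite Rabs_mult. eapply Rle_trans. apply Rmult_le_compat_l. apply Rabs_pos. apply Fn_lip; auto.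
    replace (W t / t - W' t / t) with ((W t - W' t) / t) by (field; auto).
    unfold Rdiv. rewrite Rabs_mult, Rabs_inv. right. field. split. lra. apply Rabs_no_R0; auto.
Qed.

Lemma PhiU_odd u W : even_fun u -> odd_fun W -> odd_fun (PhiU u W).
Proof.
  intros He Ho t. unfold PhiU, Fn. destruct (Req_dec t 0) as [->|Ht].
  - rewrite Ropp_0. ring.
  - rewrite He, Ho. replace (- W t / - t) with (W t / t) by (field; auto). ring.
Qed.

Lemma cmult (f g : R -> R) x : continuous f x -> continuous g x -> continuous (fun y => f y * g y) x.
Proof. intros; apply (continuous_mult f g); auto. Qed.
Lemma cplus (f g : R -> R) x : continuous f x -> continuous g x -> continuous (fun y => f y + g y) x.
Proof. intros; apply (continuous_plus f g); auto. Qed.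
Lemma cconst (c x : R) : continuous (fun _ : R => c) x.
Proof. apply continuous_const. Qed.
Lemma copp (f : R -> R) x : continuous f x -> continuous (fun y => - f y) x.
Proof.
  intros. apply (continuous_ext (fun y => (-1) * f y)). intros; rring. apply cmult; auto. apply cconst.
Qed.
Lemma cminus (f g : R -> R) x : continuous f x -> continuous g x -> continuous (fun y => f y - g y) x.
Proof. intros; apply cplus; auto; apply copp; auto. Qed.
Lemma cabs (f : R -> R) x : continuous f x -> continuous (fun y => Rabs (f y)) x.
Proof. intros; apply continuous_Rabs_comp; auto. Qed.
Lemma cpow3 (f : R -> R) x : continuous f x -> continuous (fun y => f y ^ 3) x.
Proof. intros; apply (continuous_comp f (fun y => y ^ 3)); auto. apply exd_cont; auto_derive; auto. Qed.
Lemma cmx (f g : R -> R) x : continuous f x -> continuous g x -> continuous (fun y => mx (f y) (g y)) x.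
Proof.
  intros. unfold mx. apply (continuous_ext (fun y => (f y + g y + Rabs (f y - g y)) * / 2)).
  intros; reflexivity. apply cmult. apply cplus. apply cplus; auto. apply cabs, cminus; auto. apply cconst.
Qed.

Lemma PhiU_cont u W m : 0 < m -> (forall t, m <= u t) -> contf u -> contf W -> contf (PhiU u W).
Proof.
  intros Hm Hum Cu CW t.
  assert (Hu : forall t, 0 < u t) by (intros; specialize (Hum t0); lra).
  destruct (Req_dec t 0) as [->|Ht].
  - apply continuity_pt_filterlim. apply continuity_pt_locally. intros eps.
    set (K := 8 / m ^ 3). assert (0 < K) by (apply Rdiv_lt_0_compat; [lra| apply pow_lt; lra]).
    assert (Hd : 0 < eps / (K + 1)) by (apply Rdiv_lt_0_compat; [destruct eps; simpl; lra| lra]).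
    exists (mkposreal _ Hd). intros y Hy. simpl in Hy. unfold ball in Hy; simpl in Hy; unfold AbsRing_ball, abs, minus, plus, opp in Hy; simpl in Hy.
    unfold PhiU at 2. rewrite Rmult_0_l, Rminus_0_r. unfold PhiU. rewrite Rabs_mult.
    assert (B := Fn_bound u y (W y / y) (Hu y)).
    assert (B2 : 8 / u y ^ 3 <= K).
    { unfold K, Rdiv. apply Rmult_le_compat_l. lra. apply Rinv_le_contravar. apply pow_lt; lra.
      apply pow_incr; split; [lra|auto]. }
    assert (Hy' : Rabs (y - 0) < eps / (K + 1)) by exact Hy.
    rewrite Rminus_0_r in Hy'. clear Hy. rename Hy' into Hy.
    assert (Rabs y * Rabs (Fn u y (W y / y)) <= Rabs y * K).
    { apply Rmult_le_compat_l. apply Rabs_pos. lra. }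
    assert (Rabs y * K < eps).
    { assert (Rabs y * K <= eps / (K + 1) * K). apply Rmult_le_compat_r; lra.
      assert (eps / (K + 1) * K < eps). 
      { replace (eps / (K + 1) * K) with (eps * (K / (K + 1))) by (field; lra).
        destruct eps as [e He]; simpl. 
        assert (K / (K + 1) < 1). { apply (Rmult_lt_reg_r (K + 1)). lra. field_simplify; lra. }
        nra. }
      lra. }
    lra.
  - unfold PhiU, Fn.
    apply cmult. apply continuous_id.
    apply copp. apply continuous_Rinv_comp.
    2:{ apply pow_nonzero. assert (H := mx_ge_r (W t / t) (u t / 2)). specialize (Hu t). lra. }
    apply cpow3. apply cmx.
    + apply (continuous_ext (fun y => W y * / y)). intros; reflexivity.
      apply cmult; auto. apply continuous_Rinv; auto.
    + apply (continuous_ext (fun y => u y * / 2)). intros; reflexivity.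
      apply cmult; auto. apply cconst.
Qed.

Lemma Derive_n_I0 g k x : contf g -> Derive_n (I0 g) (S k) x = Derive_n g k x.
Proof.
  intros C. rewrite <- Nat.add_1_r, <- (Derive_n_comp (I0 g) k 1 x).
  apply Derive_n_ext. intros t. simpl. apply is_derive_unique, I0_derive; auto.
Qed.

Lemma I6_Dn chi : contf chi ->
  (forall k, (k <= 5)%nat -> Derive_n (I6 chi) k 0 = 0) /\ (forall x, Derive_n (I6 chi) 6 x = chi x).
Proof.
  intros C. assert (C1 := I0_cont _ C). assert (C2 := I0_cont _ C1). assert (C3 := I0_cont _ C2).
  assert (C4 := I0_cont _ C3). assert (C5 := I0_cont _ C4).
  unfold I6. split.
  - intros k Hk.
    destruct k as [|[|[|[|[|[|k]]]]]]; try lia;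
    repeat (rewrite Derive_n_I0; [|auto]); simpl Derive_n; apply I0_0.
  - intros x. repeat (rewrite Derive_n_I0; [|auto]). reflexivity.
Qed.

Lemma Cn_exdn n f : Cn n f -> forall k x, (k <= n)%nat -> ex_derive_n f k x.
Proof.
  intros H k x Hk. destruct k. simpl; auto.
  apply Cn_smooth_aux. apply (Cn_le (S k) n); auto.
Qed.

Lemma I0_step F G H : contf G -> contf H -> (forall x, F x = G x - H x) ->
  forall x, I0 F x = I0 G x - I0 H x.
Proof.
  intros CG CH E x. unfold I0. rewrite (RInt_ext F (fun t => G t - H t)).
  apply (RInt_minus (V:=R_CompleteNormedModule)).
  apply (ex_RInt_continuous (V:=R_CompleteNormedModule)); intros; auto.
  apply (ex_RInt_continuous (V:=R_CompleteNormedModule)); intros; auto.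
  intros; auto.
Qed.

Lemma I6_minus f g : contf f -> contf g -> forall x, I6 (fun t => f t - g t) x = I6 f x - I6 g x.
Proof.
  intros Cf Cg. unfold I6.
  assert (f1 := I0_cont _ Cf). assert (f2 := I0_cont _ f1). assert (f3 := I0_cont _ f2).
  assert (f4 := I0_cont _ f3). assert (f5 := I0_cont _ f4).
  assert (g1 := I0_cont _ Cg). assert (g2 := I0_cont _ g1). assert (g3 := I0_cont _ g2).
  assert (g4 := I0_cont _ g3). assert (g5 := I0_cont _ g4).
  apply I0_step; auto. apply I0_step; auto. apply I0_step; auto. apply I0_step; auto.
  apply I0_step; auto. apply I0_step; auto.
Qed.

Lemma Cn_I6 n psi : Cn n psi -> Cn (6 + n) (I6 psi).
Proof. intros H. unfold I6. change (6 + n)%nat with (S (S (S (S (S (S n)))))). do 6 apply Cn_I0. auto. Qed.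

Lemma HL_bound m u t : 0 < m -> 0 <= t -> m * (1 + t) ^ 4 <= u t ->
  0 <= 48 / u t ^ 4 /\ 48 / u t ^ 4 * (t * (1 + t) ^ 4) <= 48 / m ^ 4 / (1 + t ^ 2).
Proof.
  intros Hm Ht Hu. set (s := 1 + t) in *.
  assert (s1 : 1 <= s) by (unfold s; lra).
  assert (Hs16 : 0 < s ^ 16) by (apply pow_lt; lra).
  assert (Hm4 : 0 < m ^ 4) by (apply pow_lt; lra).
  assert (Hms : 0 < m * s ^ 4) by (apply Rmult_lt_0_compat; [lra|apply pow_lt; lra]).
  assert (Hu4 : (m * s ^ 4) ^ 4 <= u t ^ 4) by (apply pow_incr; split; lra).
  replace ((m * s ^ 4) ^ 4) with (m ^ 4 * s ^ 16) in Hu4 by ring.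
  assert (Hms16 : 0 < m ^ 4 * s ^ 16) by (apply Rmult_lt_0_compat; auto).
  assert (Hu4p : 0 < u t ^ 4) by lra.
  split. apply Rlt_le, Rdiv_lt_0_compat; lra.
  assert (HX : t * s ^ 4 * (1 + t ^ 2) <= s ^ 16).
  { assert (t * s ^ 4 * (1 + t ^ 2) <= s * s ^ 4 * s ^ 2).
    { apply Rmult_le_compat. apply Rmult_le_pos; auto; apply pow_le; lra. nra.
      apply Rmult_le_compat_r. apply pow_le; lra. unfold s; lra. unfold s; nra. }
    assert (s ^ 7 <= s ^ 16) by (apply Rle_pow; auto; lia).
    replace (s * s ^ 4 * s ^ 2) with (s ^ 7) in H by ring. lra. }
  assert (Ht2 : 0 < 1 + t ^ 2) by nra.
  assert (L1 : 48 / u t ^ 4 <= 48 / (m ^ 4 * s ^ 16)).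
  { unfold Rdiv. apply Rmult_le_compat_l. lra. apply Rinv_le_contravar. lra. auto. }
  assert (X0 : 0 <= t * s ^ 4) by (apply Rmult_le_pos; auto; apply pow_le; lra).
  apply (Rmult_le_reg_r (1 + t ^ 2)); auto.
  replace (48 / m ^ 4 / (1 + t ^ 2) * (1 + t ^ 2)) with (48 / (m ^ 4 * s ^ 16) * s ^ 16) by (field; lra).
  rewrite Rmult_assoc. fold s.
  apply Rmult_le_compat; auto. apply Rlt_le, Rdiv_lt_0_compat; lra.
  apply Rmult_le_pos; auto. lra.
Qed.

Lemma construct (u : R -> R) : pos_entire_radial_solution u ->
  (exists l : R, is_lim (radLap (radLap u)) p_infty l /\ 0 < l) ->
  exists W delta, 0 < delta /\ smooth W /\ odd_fun W /\ (forall r, 0 < DW W r) /\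
    (forall x, DD (DD (DD W)) x = - x * / (DW W x) ^ 3) /\
    Derive_n W 1 0 = u 0 /\
    Derive_n W 3 0 = Derive_n (Wu u) 3 0 - 6 * delta /\
    Derive_n W 5 0 = Derive_n (Wu u) 5 0.
Proof.
  intros Hu Hl.
  destruct (u_facts u Hu) as [S0 [O0 [E0 E6]]].
  destruct (u_lower u Hu Hl) as [m [Hm Hum]].
  destruct Hu as [He [Hs [Hp Heq]]].
  assert (umin : forall t, m * (1 + Rabs t) ^ 4 <= u t).
  { intros t. destruct (Rle_or_lt 0 t).
    - rewrite Rabs_right by lra. apply Hum; auto.
    - rewrite Rabs_left by lra. rewrite <- He. apply Hum; lra. }
  assert (um : forall t, m <= u t).
  { intros t. eapply Rle_trans; [|apply umin].
    assert (1 <= (1 + Rabs t) ^ 4). { apply pow_R1_Rle. pose proof (Rabs_pos t); lra. }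
    nra. }
  assert (Cu : contf u) by (intros x; apply smooth_cont; auto).
  set (A := 48 / m ^ 4).
  assert (HA : 0 < A) by (apply Rdiv_lt_0_compat; [lra | apply pow_lt; lra]).
  set (E := exp (2 * A)).
  assert (HE : 0 < E) by apply exp_pos.
  set (delta := m / (4 * E)).
  assert (Hd : 0 < delta) by (apply Rdiv_lt_0_compat; lra).
  set (phu := PhiU u (Wu u)).
  assert (Ephi : forall t, phu t = DD (DD (DD (Wu u))) t).
  { intros t. rewrite E6. unfold phu, PhiU, Fn. destruct (Req_dec t 0) as [->|Ht].
    - ring.
    - replace (Wu u t / t) with (u t) by (unfold Wu; field; auto).
      rewrite mx_eq_l. ring. specialize (Hp t); lra. }
  assert (S6 : smooth (DD (DD (DD (Wu u))))) by (apply smooth_DD, smooth_DD, smooth_DD; exact S0).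
  assert (Cphi : forall n, Cn n phu).
  { intros n. apply (Cn_ext n (DD (DD (DD (Wu u))))). intros; rewrite Ephi; auto.
    apply smooth_Cn; auto. }
  assert (CPhi : contf phu) by exact (Cn_cont 0 _ (Cphi 0%nat)).
  set (Q0 := fun r => Wu u r - I6 phu r - delta * r ^ 3).
  assert (SQ : forall n, Cn n Q0).
  { intros n. unfold Q0. apply Cn_minus. apply Cn_minus. apply smooth_Cn; auto.
    apply (Cn_le n (6 + n)). lia. apply Cn_I6; auto.
    apply Cn_scal. apply (Cn_ext n (fun x => x * (x * (x * 1)))). intros; simpl; ring.
    apply Cn_mult. apply Cn_id. apply Cn_mult. apply Cn_id. apply Cn_mult. apply Cn_id. apply Cn_const. }
  assert (CQ : contf Q0) by exact (Cn_cont 0 _ (SQ 0%nat)).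
  assert (OQ : odd_fun Q0).
  { intros r. unfold Q0. rewrite O0, (I6_odd phu); auto. ring.
    unfold phu. apply PhiU_odd; auto. }
  assert (C0 : contf (Wu u)) by (intros x; apply smooth_cont; auto).
  destruct (fixed_point (PhiU u) (fun t => 48 / u t ^ 4) A Q0 (Wu u) delta) as [W [CW [OW [FW BW]]]].
  - lra.
  - lra.
  - intros W CW. apply (PhiU_cont u W m); auto.
  - intros W CW OW. apply PhiU_odd; auto.
  - intros W W' t. apply PhiU_lip; auto.
  - intros t Ht. apply HL_bound; auto.
  - auto.
  - auto.
  - auto.
  - auto.
  - intros t Ht. unfold Top, Q0. fold phu.
    replace (Wu u t - I6 phu t - delta * t ^ 3 + I6 phu t - Wu u t) with (- (delta * t ^ 3)) by ring.
    rewrite Rabs_Ropp. rewrite Rabs_right by (apply Rle_ge, Rmult_le_pos; [lra| apply pow_le; lra]).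
    apply Rmult_le_compat_l. lra. unfold wgt.
    assert (1 <= Lam A t) by (apply Lam_ge1; lra).
    assert (t ^ 3 <= t * (1 + t) ^ 4).
    { replace (t ^ 3) with (t * t ^ 2) by ring. apply Rmult_le_compat_l; auto.
      assert (t ^ 2 <= (1 + t) ^ 2) by (apply pow_incr; lra).
      assert ((1 + t) ^ 2 <= (1 + t) ^ 4) by (apply Rle_pow; [lra|lia]). lra. }
    assert (0 <= t * (1 + t) ^ 4) by (apply Rmult_le_pos; auto; apply pow_le; lra).
    nra.
  - set (psi := PhiU u W).
    assert (Cpsi : contf psi) by (apply (PhiU_cont u W m); auto).
    set (chi := fun t => psi t - phu t).
    assert (Cchi : contf chi).
    { intros x. unfold chi. apply (continuous_minus (V:=R_NormedModule) psi phu); auto. }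
    set (P := fun r => Wu u r - delta * r ^ 3).
    assert (SP : forall n, Cn n P).
    { intros n. unfold P. apply Cn_minus. apply smooth_Cn; auto.
      apply Cn_scal. apply (Cn_ext n (fun x => x * (x * (x * 1)))). intros; simpl; ring.
      apply Cn_mult. apply Cn_id. apply Cn_mult. apply Cn_id. apply Cn_mult. apply Cn_id. apply Cn_const. }
    assert (Wdec : forall r, W r = P r + I6 chi r).
    { intros r. rewrite FW. unfold Top, Q0, P, chi. rewrite I6_minus; auto. fold phu. fold psi. ring. }
    assert (W6 : Cn 6 W).
    { apply (Cn_ext 6 (fun r => Q0 r + I6 psi r)). intros; rewrite FW; reflexivity.
      apply Cn_plus. apply SQ. apply (Cn_I6 0). exact Cpsi. }
    assert (Ich : Cn 6 (I6 chi)) by (apply (Cn_I6 0); exact Cchi).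
    assert (Dsplit : forall k x, (k <= 6)%nat -> Derive_n W k x = Derive_n P k x + Derive_n (I6 chi) k x).
    { intros k x Hk. rewrite (Derive_n_ext W (fun r => P r + I6 chi r)) by auto.
      apply Derive_n_plus; apply filter_forall; intros y j Hj.
      apply (Cn_exdn 6). apply SP. lia. apply (Cn_exdn 6); auto. lia. }
    destruct (I6_Dn chi Cchi) as [Ilow Ihigh].
    assert (DP : forall k x, Derive_n P k x = Derive_n (Wu u) k x - delta * Derive_n (fun r => r ^ 3) k x).
    { intros k x. unfold P. rewrite Derive_n_minus. rewrite Derive_n_scal_l. reflexivity.
      apply filter_forall; intros y j Hj. apply S0.
      apply filter_forall; intros y j Hj. apply (Cn_exdn j). 2: lia.
      apply Cn_scal. apply (Cn_ext j (fun x => x * (x * (x * 1)))). intros; simpl; ring.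
      apply Cn_mult. apply Cn_id. apply Cn_mult. apply Cn_id. apply Cn_mult. apply Cn_id. apply Cn_const. }
    assert (W0 : W 0 = 0) by (apply odd_0; auto).
    assert (VW : forall r, r * DW W r = W r).
    { intros r. unfold DW. rewrite Dq0_mul. rewrite W0; ring.
      apply (exd_of_Cn 5); auto. intros x. exact (Cn_cont 0 _ (Cn_le 0 5 _ ltac:(lia) (proj2 W6)) x). }
    assert (D1 : Derive_n W 1 0 = u 0).
    { rewrite Dsplit, Ilow by lia. rewrite DP. rewrite Derive_n_pow_smalli by lia.
      change (Derive_n (Wu u) 1 0) with (Derive (Wu u) 0). rewrite <- DW_at0, E0. simpl; ring. }
    assert (D3 : Derive_n W 3 0 = Derive_n (Wu u) 3 0 - 6 * delta).
    { rewrite Dsplit, Ilow by lia. rewrite DP. rewrite Derive_n_pow_smalli by lia. replace (INR (Factorial.fact 3) / INR (Factorial.fact (3 - 3)) * 0 ^ (3 - 3)) with 6 by (simpl; field). ring. }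
    assert (D5 : Derive_n W 5 0 = Derive_n (Wu u) 5 0).
    { rewrite Dsplit, Ilow by lia. rewrite DP. rewrite Derive_n_pow_bigi by lia. ring. }
    assert (Lb : forall t, Lam A t <= E).
    { intros t. unfold Lam, E. apply Rlt_le, exp_increasing. rewrite (Rmult_comm 2 A). apply Rmult_lt_compat_l; auto.
      destruct (atan_bound t). pose proof PI_4. lra. }
    assert (Vq : forall t, 0 < t -> u t / 2 <= W t / t).
    { intros t Ht. assert (B := BW t (Rlt_le _ _ Ht)). unfold wgt in B.
      assert (B2 : 2 * delta * (t * (1 + t) ^ 4 * Lam A t) <= t * u t / 2).
      { assert (0 <= t * (1 + t) ^ 4) by (apply Rmult_le_pos; [lra|apply pow_le; lra]).
        apply Rle_trans with (2 * delta * (t * (1 + t) ^ 4 * E)).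
        apply Rmult_le_compat_l. lra. apply Rmult_le_compat_l; auto.
        replace (2 * delta * (t * (1 + t) ^ 4 * E)) with (t * (m * (1 + t) ^ 4) / 2) by (unfold delta; field; lra).
        assert (m * (1 + t) ^ 4 <= u t) by (apply Hum; lra). nra. }
      unfold Wu in B. assert (B3 := Rabs_maj2 (W t - t * u t)).
      apply (Rmult_le_reg_r t); auto. replace (W t / t * t) with (W t) by (field; lra). lra. }
    assert (Vq' : forall t, t <> 0 -> u t / 2 <= W t / t).
    { intros t Ht. destruct (Rle_or_lt 0 t). apply Vq; lra.
      replace (W t / t) with (W (- t) / (- t)) by (rewrite OW; field; auto).
      rewrite <- He. apply Vq; lra. }
    assert (Vpos : forall r, 0 < DW W r).
    { intros r. destruct (Req_dec r 0) as [->|Hr].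
      - rewrite DW_at0. change (Derive W 0) with (Derive_n W 1 0). rewrite D1; auto.
      - replace (DW W r) with (W r / r). specialize (Vq' r Hr). specialize (Hp r). lra.
        rewrite <- (VW r). field; auto. }
    assert (Psi2 : forall t, psi t = - t * / (DW W t) ^ 3).
    { intros t. unfold psi, PhiU, Fn. destruct (Req_dec t 0) as [->|Ht]. ring.
      rewrite mx_eq_l by (apply Vq'; auto). replace (W t / t) with (DW W t). ring.
      rewrite <- (VW t). field; auto. }
    assert (Boot : forall n, Cn (S (S n)) W).
    { induction n. apply (Cn_le 2 6); auto; lia.
      assert (CV : Cn n (DW W)) by (apply Cn_DW; auto).
      assert (Cps : Cn n psi).
      { apply (Cn_ext n (fun t => ((-1) * t) * / (DW W t * (DW W t * (DW W t * 1))))).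
        intros t. rewrite Psi2. simpl. ring.
        apply Cn_mult. apply Cn_scal, Cn_id. apply Cn_inv.
        intros t. specialize (Vpos t). apply Rgt_not_eq. apply Rlt_gt. 
        repeat apply Rmult_lt_0_compat; lra.
        apply Cn_mult; auto. apply Cn_mult; auto. apply Cn_mult; auto. apply Cn_const. }
      apply (Cn_le (S (S (S n))) (6 + n)). lia.
      apply (Cn_ext (6 + n) (fun r => Q0 r + I6 psi r)). intros; rewrite FW; reflexivity.
      apply Cn_plus. apply SQ. apply Cn_I6; auto. }
    assert (SW : smooth W).
    { apply Cn_smooth_all. intros n. apply (Cn_le n (S (S n))). lia. apply Boot. }
    exists W, delta. split; [auto|split; [auto|split; [auto|split; [auto|split; [|split; [auto|split; auto]]]]]].
    intros x. change (DD (DD (DD W)) x) with (Derive_n W 6 x).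
    rewrite Dsplit by lia. rewrite Ihigh, DP. rewrite Derive_n_pow_bigi by lia.
    change (Derive_n (Wu u) 6 x) with (DD (DD (DD (Wu u))) x). rewrite <- Ephi.
    unfold chi. rewrite Psi2. ring.
Qed.

Theorem lemma4 (u : R -> R) :
  pos_entire_radial_solution u ->
  (exists l : R, is_lim (radLap (radLap u)) p_infty l /\ 0 < l) ->
  exists v : R -> R,
    pos_entire_radial_solution v /\
    v 0 = u 0 /\
    radLap v 0 < radLap u 0 /\
    radLap (radLap v) 0 = radLap (radLap u) 0.
Proof.
  intros Hu Hl.
  destruct (construct u Hu Hl) as [W [d [Hd [SW [OW [Vpos [W6e [D1 [D3 D5]]]]]]]]].
  destruct (u_facts u Hu) as [S0 [O0 [E0 E6]]].
  exists (DW W).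
  assert (Ru1 : radLap u 0 = Derive_n (Wu u) 3 0).
  { rewrite (radLap_ext u (DW (Wu u))) by (intros; rewrite E0; auto).
    rewrite radLap_odd by auto. rewrite DW_at0. reflexivity. }
  assert (Ru2 : radLap (radLap u) 0 = Derive_n (Wu u) 5 0).
  { rewrite (radLap2_ext u (DW (Wu u))) by (intros; rewrite E0; auto).
    rewrite radLap2_odd by auto. rewrite DW_at0. reflexivity. }
  split; [|split; [|split]].
  - split; [|split; [|split]].
    + apply even_DW; auto.
    + apply smooth_DW; auto.
    + auto.
    + intros r Hr. rewrite radLap3_odd by auto.
      assert (S6 : smooth (DD (DD (DD W)))) by (apply smooth_DD, smooth_DD, smooth_DD; exact SW).
      destruct (Req_dec r 0) as [->|Hr0].
      * rewrite DW_at0. rewrite (Derive_ext _ (fun x => - x * / (DW W x) ^ 3)) by auto.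
        assert (V0 := Vpos 0).
        assert (dV : ex_derive (DW W) 0) by (apply smooth_exd, smooth_DW; auto).
        apply is_derive_unique. auto_derive. split; [exact dV|split; [|exact I]]. apply Rgt_not_eq, Rlt_gt. repeat apply Rmult_lt_0_compat; lra.
        simpl. field. lra.
      * assert (M := DW_mul _ r S6). rewrite !W6e in M.
        apply (Rmult_eq_reg_l r); auto. rewrite M. assert (V1 := Vpos r). assert (V2 := Vpos 0). field. split; lra.
  - rewrite DW_at0. exact D1.
  - rewrite radLap_odd by auto. rewrite DW_at0. rewrite Ru1.
    change (Derive (DD W) 0) with (Derive_n W 3 0). lra.
  - rewrite radLap2_odd by auto. rewrite DW_at0. rewrite Ru2.
    change (Derive (DD (DD W)) 0) with (Derive_n W 5 0). auto.
Qed.
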